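(* Let $(Y,d)$ be a locally compact Hadamard space, $\Lambda$ a group acting properly and co-compactly by isometries on $Y$, and $y\in Y$ a reference point. Then for any conjugate finite lists $(a_i)_{1\le i\le N}$, $(b_i)_{1\le i\le N}$ in $\Lambda$ there exists $g\in\Lambda$ with $b_i=g^{-1}a_ig$ for all $i$ such that $$d_y(g,e)\leqslant C_\star\sum_{i=1}^N\big(d_y(a_i,e)+d_y(b_i,e)\big)+C,$$ where $d_y(g,h)=d(g\cdot y,h\cdot y)$ and the constants $C_\star,C$ depend only on the conjugacy class of the list $(a_i)$ (and on $y$).
   Context: A Hadamard space is a complete metric space $(Y,d)$ such that any two points are joined by a curve whose length equals their distance (a geodesic), and for any points $P,Q,R$ and $0\le\lambda\le1$, the point $Q_\lambda$ on the geodesic from $Q$ to $R$ with $d(Q_\lambda,Q)=\lambda d(Q,R)$ satisfies $d(P,Q_\lambda)^2\le(1-\lambda)d(P,Q)^2+\lambda d(P,R)^2-\lambda(1-\lambda)d(Q,R)^2$. Proper action: each $y$ has $r>0$ with $\{g: gB(y,r)\cap B(y,r)\ne\varnothing\}$ finite; co-compact: $Y/\Lambda$ compact. Lists are conjugate if some $g\in\Lambda$ satisfies $b_i=g^{-1}a_ig$ for all $i$. *)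

(* Defs.v *)
From Stdlib Require Import Reals List.
Import ListNotations.
Open Scope R_scope.

Section MetricDefs.
Variable Y : Type.
Variable d : Y -> Y -> R.

Definition is_metric : Prop :=
  (forall x y, 0 <= d x y) /\ (forall x y, d x y = 0 <-> x = y) /\
  (forall x y, d x y = d y x) /\ (forall x y z, d x z <= d x y + d y z).

Definition ball (x : Y) (r : R) : Y -> Prop := fun z => d x z < r.

Definition open_set (U : Y -> Prop) : Prop :=
  forall x, U x -> exists eps, 0 < eps /\ forall z, d x z < eps -> U z.

Definition compact_set (K : Y -> Prop) : Prop :=
  forall (I : Type) (U : I -> Y -> Prop),
    (forall i, open_set (U i)) ->
    (forall x, K x -> exists i, U i x) ->
    exists l : list I, forall x, K x -> exists i, In i l /\ U i x.

Definition locally_compact : Prop :=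
  forall x, exists K : Y -> Prop, compact_set K /\
    exists r, 0 < r /\ forall z, d x z < r -> K z.

Definition complete : Prop :=
  forall u : nat -> Y,
    (forall eps, 0 < eps -> exists N, forall m n, (N <= m)%nat -> (N <= n)%nat ->
        d (u m) (u n) < eps) ->
    exists l, forall eps, 0 < eps -> exists N, forall n, (N <= n)%nat -> d (u n) l < eps.

Definition geodesic (x y : Y) (c : R -> Y) : Prop :=
  c 0 = x /\ c 1 = y /\
  forall s t, 0 <= s <= 1 -> 0 <= t <= 1 -> d (c s) (c t) = Rabs (s - t) * d x y.

Definition hadamard : Prop :=
  is_metric /\ complete /\
  (forall x y, exists c, geodesic x y c) /\
  (forall P Q R' (c : R -> Y) lam, geodesic Q R' c -> 0 <= lam <= 1 ->
     (d P (c lam))^2 <= (1 - lam) * (d P Q)^2 + lam * (d P R')^2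
                         - lam * (1 - lam) * (d Q R')^2).
End MetricDefs.

Section GroupDefs.
Variable G : Type.
Variable mul : G -> G -> G.
Variable inv : G -> G.
Variable e : G.

Definition is_group : Prop :=
  (forall a b c, mul a (mul b c) = mul (mul a b) c) /\
  (forall a, mul e a = a) /\ (forall a, mul a e = a) /\
  (forall a, mul (inv a) a = e) /\ (forall a, mul a (inv a) = e).

Definition conjg (g a : G) : G := mul (inv g) (mul a g).

Definition conj_lists (a b : list G) : Prop :=
  exists g, b = map (conjg g) a.

Variable Y : Type.
Variable d : Y -> Y -> R.
Variable act : G -> Y -> Y.

Definition isometric_action : Prop :=
  (forall x, act e x = x) /\
  (forall g h x, act (mul g h) x = act g (act h x)) /\
  (forall g x z, d (act g x) (act g z) = d x z).

Definition proper_action : Prop :=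
  forall x, exists r, 0 < r /\ exists l : list G,
    forall g, (exists z, ball Y d x r z /\ ball Y d x r (act g z)) -> In g l.

(* Y / G compact for the quotient topology: open sets of Y/G are exactly the
   G-invariant open subsets of Y *)
Definition cocompact_action : Prop :=
  forall (I : Type) (U : I -> Y -> Prop),
    (forall i, open_set Y d (U i)) ->
    (forall i g x, U i x -> U i (act g x)) ->
    (forall x, exists i, U i x) ->
    exists l : list I, forall x, exists i, In i l /\ U i x.

Definition dy (y : Y) (g h : G) : R := d (act g y) (act h y).
End GroupDefs.

Fixpoint sumR (l : list R) : R :=
  match l with [] => 0 | x :: t => x + sumR t end.

(* Main.v *)
Require Import Defs.
From Stdlib Require Import Reals List Lra Lia Psatz Classical.
Import ListNotations.
Open Scope R_scope.

Section Main.
Variables (Y : Type) (d : Y -> Y -> R) (G : Type) (mul : G -> G -> G) (inv : G -> G) (e : G)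
  (act : G -> Y -> Y).
Hypothesis Hmet : is_metric Y d.
Hypothesis Hgeo : forall x z, exists c, geodesic Y d x z c.
Hypothesis Hcat : forall P Q R' (c : R -> Y) lam, geodesic Y d Q R' c -> 0 <= lam <= 1 ->
     (d P (c lam))^2 <= (1 - lam) * (d P Q)^2 + lam * (d P R')^2
                         - lam * (1 - lam) * (d Q R')^2.
Hypothesis Hgrp : is_group G mul inv e.
Hypothesis Hact : isometric_action G mul e Y d act.

Lemma d_nonneg x z : 0 <= d x z. Proof. apply Hmet. Qed.
Lemma d_refl x : d x x = 0. Proof. apply Hmet; reflexivity. Qed.
Lemma d_sym x z : d x z = d z x. Proof. apply Hmet. Qed.
Lemma d_tri x z w : d x w <= d x z + d z w. Proof. apply Hmet. Qed.

Lemma massoc a b c : mul a (mul b c) = mul (mul a b) c. Proof. apply Hgrp. Qed.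
Lemma mel a : mul e a = a. Proof. apply Hgrp. Qed.
Lemma mer a : mul a e = a. Proof. apply Hgrp. Qed.
Lemma minvl a : mul (inv a) a = e. Proof. apply Hgrp. Qed.
Lemma minvr a : mul a (inv a) = e. Proof. apply Hgrp. Qed.

Lemma inv_uniq a b : mul a b = e -> b = inv a.
Proof. intro H. rewrite <- (mel b), <- (minvl a), <- massoc, H, mer. reflexivity. Qed.
Lemma inv_mul a b : inv (mul a b) = mul (inv b) (inv a).
Proof. symmetry; apply inv_uniq.
 rewrite <- massoc, (massoc b), minvr, mel, minvr. reflexivity. Qed.
Lemma inv_inv a : inv (inv a) = a.
Proof. symmetry; apply inv_uniq. apply minvl. Qed.
Lemma inv_e : inv e = e.
Proof. symmetry; apply inv_uniq. apply mel. Qed.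

Lemma conjg_mul z w x : conjg G mul inv (mul z w) x = conjg G mul inv w (conjg G mul inv z x).
Proof. unfold conjg. rewrite inv_mul. rewrite !massoc. reflexivity. Qed.
Lemma conjg_inv g x : conjg G mul inv (inv g) (conjg G mul inv g x) = x.
Proof. unfold conjg. rewrite inv_inv, !massoc, minvr, mel, <- massoc, minvr, mer. reflexivity. Qed.
Lemma conjg_e x : conjg G mul inv e x = x.
Proof. unfold conjg. rewrite inv_e, mel, mer. reflexivity. Qed.

Lemma act_e x : act e x = x. Proof. apply Hact. Qed.
Lemma act_mul g h x : act (mul g h) x = act g (act h x). Proof. apply Hact. Qed.
Lemma act_iso g x z : d (act g x) (act g z) = d x z. Proof. apply Hact. Qed.
Lemma act_inv_l g x : act (inv g) (act g x) = x.
Proof. rewrite <- act_mul, minvl, act_e. reflexivity. Qed.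
Lemma act_inv_r g x : act g (act (inv g) x) = x.
Proof. rewrite <- act_mul, minvr, act_e. reflexivity. Qed.
Lemma d_act_inv g p q : d (act (inv g) p) q = d p (act g q).
Proof. rewrite <- (act_iso g), act_inv_r. reflexivity. Qed.

Lemma geo_dist x z c s t : geodesic Y d x z c -> 0 <= s <= 1 -> 0 <= t <= 1 ->
  d (c s) (c t) = Rabs (s - t) * d x z.
Proof. intros [_ [_ H]]; apply H. Qed.

Lemma geo_rev x z c : geodesic Y d x z c -> geodesic Y d z x (fun s => c (1 - s)).
Proof.
  intros [H0 [H1 H]]. split; [|split].
  - replace (1-0) with 1 by ring. exact H1.
  - replace (1-1) with 0 by ring. exact H0.
  - intros s t Hs Ht. rewrite H by lra. rewrite d_sym.
    replace (1 - s - (1 - t)) with (-(s-t)) by ring. rewrite Rabs_Ropp. reflexivity.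
Qed.

Lemma sq_le a b : 0 <= a -> 0 <= b -> a^2 <= b^2 -> a <= b.
Proof. intros. nra. Qed.

Lemma convex_common p q q' c c' t : geodesic Y d p q c -> geodesic Y d p q' c' -> 0 <= t <= 1 ->
  d (c t) (c' t) <= t * d q q'.
Proof.
  intros Hc Hc' Ht.
  pose proof (Hcat (c t) p q' c' t Hc' Ht) as H1.
  pose proof (Hcat q' p q c t Hc Ht) as H2.
  assert (E : d (c t) p = t * d p q).
  { pose proof (geo_dist p q c t 0 Hc Ht ltac:(lra)) as G0.
    destruct Hc as [H0 [_ _]]. rewrite H0 in G0. rewrite G0.
    rewrite Rminus_0_r, Rabs_pos_eq by lra. reflexivity. }
  rewrite E in H1. rewrite (d_sym q' p) in H2. rewrite (d_sym q' q) in H2.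
  apply sq_le; [apply d_nonneg| pose proof (d_nonneg q q'); nra|].
  assert (0 <= t) by lra. assert (0 <= 1 - t) by lra.
  assert (H3 : t * d q' (c t) ^ 2 <= t * ((1 - t) * d p q' ^ 2 + t * d q q' ^ 2 - t * (1 - t) * d p q ^ 2)) by (apply Rmult_le_compat_l; lra).
  rewrite (d_sym (c t) q') in H1. lra.
Qed.

Lemma convex_dist p q p' q' c c' t : geodesic Y d p q c -> geodesic Y d p' q' c' -> 0 <= t <= 1 ->
  d (c t) (c' t) <= (1 - t) * d p p' + t * d q q'.
Proof.
  intros Hc Hc' Ht. destruct (Hgeo p q') as [c'' Hc''].
  pose proof (convex_common p q q' c c'' t Hc Hc'' Ht) as A.
  pose proof (convex_common q' p p' _ _ (1 - t) (geo_rev _ _ _ Hc'') (geo_rev _ _ _ Hc') ltac:(lra)) as B.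
  cbv beta in B. replace (1 - (1 - t)) with t in B by ring.
  pose proof (d_tri (c t) (c'' t) (c' t)). lra.
Qed.

Lemma geo_act g x z c : geodesic Y d x z c -> geodesic Y d (act g x) (act g z) (fun s => act g (c s)).
Proof.
  intros [H0 [H1 H]]. split; [|split].
  - simpl. rewrite H0. reflexivity.
  - simpl. rewrite H1. reflexivity.
  - intros. rewrite !act_iso. auto.
Qed.

Definition F (a : list G) (p : Y) : R := sumR (map (fun ai => d p (act ai p)) a).

Lemma F_convex a p q c t : geodesic Y d p q c -> 0 <= t <= 1 ->
  F a (c t) <= (1 - t) * F a p + t * F a q.
Proof.
  intros Hc Ht. induction a as [|ai a IH]; unfold F in *; simpl.
  - lra.
  - pose proof (convex_dist p q (act ai p) (act ai q) c _ t Hc (geo_act ai _ _ _ Hc) Ht). lra.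
Qed.

Lemma F_nonneg a p : 0 <= F a p.
Proof. induction a; unfold F in *; simpl. lra. pose proof (d_nonneg p (act a p)). lra. Qed.

Lemma F_term a ai p : In ai a -> d p (act ai p) <= F a p.
Proof.
  induction a as [|b a IH]; unfold F in *; simpl; intros H. contradiction.
  destruct H as [->|H].
  - pose proof (F_nonneg a p). unfold F in H. lra.
  - pose proof (IH H). pose proof (d_nonneg p (act b p)). lra.
Qed.

Hypothesis Hprop : proper_action G Y d act.
Hypothesis Hcoc : cocompact_action G Y d act.

Definition good (xr : Y * R) : Prop :=
  0 < snd xr /\ exists l : list G, forall g,
    (exists z, d (fst xr) z < 8 * snd xr /\ d (fst xr) (act g z) < 8 * snd xr) -> In g l.

Definition inB (h : G) (xr : Y * R) (p : Y) : Prop := d (act h (fst xr)) p < snd xr.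

Lemma cover : exists cs : list (Y * R), (forall xr, In xr cs -> good xr) /\
  forall p, exists xr h, In xr cs /\ inB h xr p.
Proof.
  set (I := {xr : Y * R | good xr}).
  set (U := fun (i : I) p => exists h, inB h (proj1_sig i) p).
  destruct (Hcoc I U) as [l Hl].
  - intros [[x r] Hg] p [h Hh]. unfold inB in Hh; simpl in *.
    exists (r - d (act h x) p). split. lra.
    intros z Hz. exists h. unfold inB; simpl. pose proof (d_tri (act h x) p z). lra.
  - intros [[x r] Hg] g p [h Hh]. exists (mul g h). unfold inB in *; simpl in *.
    rewrite act_mul, act_iso. exact Hh.
  - intros p. destruct (Hprop p) as [r [Hr [l Hl]]].
    assert (Hg : good (p, r / 8)).
    { split; simpl. lra. exists l. intros g [z [H1 H2]]. apply Hl. exists z.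
      unfold ball. split; lra. }
    exists (exist _ (p, r/8) Hg). exists e. unfold inB; simpl. rewrite act_e, d_refl. lra.
  - exists (map (@proj1_sig _ _) l). split.
    + intros xr Hin. apply in_map_iff in Hin. destruct Hin as [[xr' Hg] [<- _]]. exact Hg.
    + intros p. destruct (Hl p) as [i [Hi [h Hh]]]. exists (proj1_sig i), h. split; auto.
      apply in_map. exact Hi.
Qed.

Lemma list_max {X} (l : list X) (f : X -> R) : exists M, forall x, In x l -> f x <= M.
Proof.
  induction l as [|x l [M HM]]. exists 0. intros _ [].
  exists (Rmax (f x) M). intros z [->|Hz]. apply Rmax_l. eapply Rle_trans. apply HM, Hz. apply Rmax_r.
Qed.

Lemma list_min_pos (l : list (Y * R)) : (forall xr, In xr l -> 0 < snd xr) ->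
  exists eps, 0 < eps /\ forall xr, In xr l -> eps <= snd xr.
Proof.
  induction l as [|x l IH]; intros H. exists 1. split. lra. intros _ [].
  destruct IH as [eps [He Hl]]. intros; apply H; right; auto.
  exists (Rmin eps (snd x)). split. apply Rmin_pos; auto. apply H; left; auto.
  intros z [->|Hz]. apply Rmin_r. eapply Rle_trans. apply Rmin_l. auto.
Qed.

Lemma cobounded (y : Y) : exists D, forall p, exists h, d p (act h y) <= D.
Proof.
  destruct cover as [cs [Hg Hc]].
  destruct (list_max cs (fun xr => snd xr + d (fst xr) y)) as [M HM].
  exists M. intros p. destruct (Hc p) as [xr [h [Hin Hh]]]. exists h.
  unfold inB in Hh. pose proof (HM xr Hin). simpl in H.
  pose proof (d_tri p (act h (fst xr)) (act h y)). rewrite act_iso in H0.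
  rewrite d_sym in Hh. lra.
Qed.

Definition T (j k : Y * R) (s : G) : Prop :=
  exists u, d (fst k) u < snd k /\ d (fst j) (act s u) < 2 * snd j.

Lemma T_finite j k : good j -> good k -> exists L, forall s, T j k s -> In s L.
Proof.
  intros [Hj [lj Hlj]] [Hk [lk Hlk]].
  destruct (classic (exists s0, T j k s0)) as [[s0 [u0 [Hu0 Hsu0]]]|Hn].
  2:{ exists nil. intros s Hs. exfalso. apply Hn. eauto. }
  destruct (Rle_lt_dec (snd k) (snd j)) as [Hle|Hlt].
  - exists (map (fun w => mul w s0) lj). intros s [u [Hu Hsu]].
    apply in_map_iff. exists (mul s (inv s0)). split.
    + rewrite <- massoc, minvl, mer. reflexivity.
    + apply Hlj. exists (act s0 u0). split. lra.
      rewrite <- act_mul, <- massoc, minvl, mer.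
      pose proof (d_tri (fst j) (act s u) (act s u0)). rewrite act_iso in H.
      pose proof (d_tri u0 (fst k) u). rewrite d_sym in Hu0. rewrite (d_sym u u0) in H. lra.
  - exists (map (fun w => mul s0 w) lk). intros s [u [Hu Hsu]].
    apply in_map_iff. exists (mul (inv s0) s). split.
    + rewrite massoc, minvr, mel. reflexivity.
    + apply Hlk. exists u. split. lra.
      rewrite act_mul.
      pose proof (d_tri (fst k) u0 (act (inv s0) (act s u))).
      assert (E : d u0 (act (inv s0) (act s u)) = d (act s0 u0) (act s u)).
      { rewrite d_sym, d_act_inv, d_sym. reflexivity. }
      pose proof (d_tri (act s0 u0) (fst j) (act s u)). rewrite (d_sym _ (fst j)) in H0. lra.
Qed.

Lemma fin_union {X} (l : list X) (P : X -> G -> Prop) :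
  (forall x, In x l -> exists L, forall g, P x g -> In g L) ->
  exists L, forall x, In x l -> forall g, P x g -> In g L.
Proof.
  induction l as [|x l IH]; intros H. exists nil. intros _ [].
  destruct (H x (or_introl eq_refl)) as [L1 H1].
  destruct IH as [L2 H2]. intros; apply H; right; auto.
  exists (L1 ++ L2). intros z [->|Hz] g Hg; apply in_or_app. left; auto. right; eauto.
Qed.

Lemma trans_step h h' j k p p' : inB h j p -> inB h' k p' -> d p p' < snd j ->
  T j k (mul (inv h) h').
Proof.
  intros Hp Hp' Hd. unfold inB, T in *. exists (act (inv h') p'). split.
  - rewrite d_sym, d_act_inv, d_sym. exact Hp'.
  - rewrite <- act_mul, <- massoc, minvr, mer.
    rewrite d_sym, d_act_inv, d_sym. pose proof (d_tri (act h (fst j)) p p'). lra.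
Qed.

Fixpoint Wl (h0 : G) (Lt : list G) (n : nat) : list G :=
  match n with O => [h0] | S n => flat_map (fun w => map (mul w) Lt) (Wl h0 Lt n) end.

Lemma finiteness y K : exists L, forall g, d y (act g y) <= K -> In g L.
Proof.
  destruct cover as [cs [Hg Hc]].
  destruct (list_min_pos cs) as [eps [He Hle]]. { intros xr H. apply (Hg xr H). }
  destruct (fin_union cs (fun j s => exists k, In k cs /\ T j k s)) as [Lt HLt].
  { intros j Hj. destruct (fin_union cs (fun k s => T j k s)) as [L HL].
    - intros k Hk. apply T_finite; auto.
    - exists L. intros g [k [Hk Ht]]. eapply HL; eauto. }
  destruct (Hc y) as [x0 [h0 [Hx0 Hh0]]].
  destruct (INR_archimed eps (Rabs K) He) as [N HN].
  assert (HNpos : 0 < INR N).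
  { destruct N. simpl in HN. pose proof (Rabs_pos K). lra. apply lt_0_INR. lia. }
  exists (flat_map (fun hN => map (fun s => mul hN (mul (inv s) (inv h0))) Lt) (Wl h0 Lt N)).
  intros g Hgy. destruct (Hgeo y (act g y)) as [c Hcg].
  assert (Hstep : forall k, (k <= N)%nat -> exists h xr, In xr cs /\ inB h xr (c (INR k / INR N)) /\ In h (Wl h0 Lt k)).
  { induction k as [|k IH]; intros Hk.
    - exists h0, x0. split; auto. split. 2: simpl; auto.
      replace (INR 0 / INR N) with 0 by (simpl; field; lra). destruct Hcg as [-> _]. exact Hh0.
    - destruct IH as [h [xr [Hxr [Hh HW]]]]. lia.
      destruct (Hc (c (INR (S k) / INR N))) as [xr' [h' [Hxr' Hh']]].
      exists h', xr'. split; auto. split; auto.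
      assert (Hd : d (c (INR k / INR N)) (c (INR (S k) / INR N)) < snd xr).
      { rewrite (geo_dist _ _ _ _ _ Hcg).
        - rewrite S_INR. replace (INR k / INR N - (INR k + 1) / INR N) with (- / INR N) by (field; lra).
          rewrite Rabs_Ropp, Rabs_pos_eq. 2: left; apply Rinv_0_lt_compat; lra.
          apply Rlt_le_trans with eps. 2: apply Hle; auto.
          apply Rmult_lt_reg_l with (INR N). lra. rewrite <- Rmult_assoc, Rinv_r by lra.
          pose proof (Rle_abs K). lra.
        - apply le_INR in Hk. rewrite S_INR in Hk. pose proof (pos_INR k). split.
          unfold Rdiv; apply Rmult_le_pos; [lra | left; apply Rinv_0_lt_compat; lra]. apply Rmult_le_reg_r with (INR N). lra.
          unfold Rdiv. rewrite Rmult_assoc, Rinv_l by lra. lra.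
        - apply le_INR in Hk. pose proof (pos_INR (S k)). split.
          unfold Rdiv; apply Rmult_le_pos; [lra | left; apply Rinv_0_lt_compat; lra]. apply Rmult_le_reg_r with (INR N). lra.
          unfold Rdiv. rewrite Rmult_assoc, Rinv_l by lra. lra. }
      pose proof (trans_step _ _ _ _ _ _ Hh Hh' Hd) as Ht.
      simpl. apply in_flat_map. exists h. split; auto. apply in_map_iff.
      exists (mul (inv h) h'). split. rewrite massoc, minvr, mel. reflexivity.
      eapply HLt. exact Hxr. exists xr'. split; auto. }
  destruct (Hstep N (Nat.le_refl N)) as [hN [xN [HxN [HhN HWN]]]].
  replace (INR N / INR N) with 1 in HhN by (field; lra).
  destruct Hcg as [_ [Hc1 _]]. rewrite Hc1 in HhN.
  assert (H0' : inB (mul g h0) x0 (act g y)).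
  { unfold inB in *. rewrite act_mul, act_iso. exact Hh0. }
  assert (Hd0 : d (act g y) (act g y) < snd x0). { rewrite d_refl. apply Hg; auto. }
  pose proof (trans_step _ _ _ _ _ _ H0' HhN Hd0) as Ht.
  apply in_flat_map. exists hN. split; auto. apply in_map_iff.
  exists (mul (inv (mul g h0)) hN). split.
  - rewrite inv_mul, inv_inv. rewrite !massoc. rewrite minvr, mel, <- massoc, minvr, mer. reflexivity.
  - eapply HLt. exact Hx0. exists xN. split; auto.
Qed.

Fixpoint allLists (L : list G) (n : nat) : list (list G) :=
  match n with O => [nil] | S n => flat_map (fun x => map (cons x) (allLists L n)) L end.

Lemma allLists_in L l : (forall x, In x l -> In x L) -> In l (allLists L (length l)).
Proof.
  induction l as [|x l IH]; intros H; simpl. auto.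
  apply in_flat_map. exists x. split. apply H; left; auto. apply in_map. apply IH. intros; apply H; right; auto.
Qed.

Lemma reps {X} (cs : list X) (P : G -> X -> Prop) (f : G -> R) :
  exists M, forall c, In c cs -> forall h, P h c -> exists h', P h' c /\ f h' <= M.
Proof.
  induction cs as [|c cs [M HM]]. exists 0. intros _ [].
  destruct (classic (exists h, P h c)) as [[h0 Hh0]|Hn].
  - exists (Rmax (f h0) M). intros c' [<-|Hc] h Hh.
    + exists h0. split; auto. apply Rmax_l.
    + destruct (HM c' Hc h Hh) as [h' [H1 H2]]. exists h'. split; auto.
      eapply Rle_trans. exact H2. apply Rmax_r.
  - exists M. intros c' [<-|Hc] h Hh. exfalso; eauto. eauto.
Qed.

Definition Zmem (a : list G) (z : G) : Prop := map (conjg G mul inv z) a = a.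

Lemma map_fix {X} (f : X -> X) l x : map f l = l -> In x l -> f x = x.
Proof.
  induction l as [|b l IH]; simpl; intros H Hin. contradiction.
  injection H as H1 H2. destruct Hin as [->|Hin]; auto.
Qed.

Lemma Zmem_act a z ai x : Zmem a z -> In ai a -> act ai (act z x) = act z (act ai x).
Proof.
  intros Hz Hin. pose proof (map_fix _ _ _ Hz Hin) as E. unfold conjg in E.
  rewrite <- !act_mul. f_equal.
  rewrite <- E at 2. rewrite !massoc, minvr, mel. reflexivity.
Qed.

Lemma F_Z a z x : Zmem a z -> F a (act z x) = F a x.
Proof.
  intros Hz. unfold F. f_equal. apply map_ext_in. intros ai Hin.
  rewrite (Zmem_act a z ai x Hz Hin), act_iso. reflexivity.
Qed.

Lemma Zmem_e a : Zmem a e.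
Proof. unfold Zmem. rewrite (map_ext _ (fun x => x)) by apply conjg_e. apply map_id. Qed.

Lemma Zmem_same a h h' : map (conjg G mul inv h) a = map (conjg G mul inv h') a ->
  Zmem a (mul h (inv h')).
Proof.
  intros H. unfold Zmem.
  rewrite (map_ext _ (fun x => conjg G mul inv (inv h') (conjg G mul inv h x))) by apply conjg_mul.
  rewrite <- map_map, H, map_map.
  rewrite (map_ext _ (fun x => x)) by apply conjg_inv. apply map_id.
Qed.

Lemma d_conj h ai y : d y (act (conjg G mul inv h ai) y) = d (act h y) (act ai (act h y)).
Proof. unfold conjg. rewrite !act_mul, d_sym, d_act_inv, d_sym. reflexivity. Qed.

Lemma bounded_Z a y K : exists M, forall h, (forall ai, In ai a -> d y (act (conjg G mul inv h ai) y) <= K) ->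
  exists z, Zmem a z /\ d (act h y) (act z y) <= M.
Proof.
  destruct (finiteness y K) as [L HL].
  destruct (reps (allLists L (length a)) (fun h c => map (conjg G mul inv h) a = c) (fun h => d (act h y) y)) as [M HM].
  exists M. intros h Hh.
  assert (Hin : In (map (conjg G mul inv h) a) (allLists L (length a))).
  { rewrite <- (length_map (conjg G mul inv h) a). apply allLists_in.
    intros x Hx. apply in_map_iff in Hx. destruct Hx as [ai [<- Hai]]. apply HL. apply Hh; auto. }
  destruct (HM _ Hin h eq_refl) as [h' [E Hh']].
  exists (mul h (inv h')). split. apply Zmem_same. auto.
  rewrite act_mul, act_iso, d_sym, d_act_inv, d_sym. exact Hh'.
Qed.

Lemma sublevel a y m0 : exists M, forall p, F a p <= m0 -> exists z, Zmem a z /\ d p (act z y) <= M.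
Proof.
  destruct (cobounded y) as [D HD].
  destruct (bounded_Z a y (2 * D + m0)) as [M HM].
  exists (D + M). intros p Hp. destruct (HD p) as [h Hh].
  destruct (HM h) as [z [Hz Hd]].
  - intros ai Hai. rewrite d_conj.
    pose proof (d_tri (act h y) p (act ai (act h y))).
    pose proof (d_tri p (act ai p) (act ai (act h y))). rewrite act_iso in H0.
    pose proof (F_term a ai p Hai). rewrite (d_sym (act h y) p) in H. lra.
  - exists z. split; auto. pose proof (d_tri p (act h y) (act z y)). lra.
Qed.

Lemma growth a y : exists L, 0 < L /\ forall p, exists z, Zmem a z /\ d p (act z y) <= L * F a p + L.
Proof.
  set (m1 := F a y).
  destruct (sublevel a y (m1 + 1)) as [M HM].
  set (L := Rabs M + 2). assert (HL : 0 < L) by (unfold L; pose proof (Rabs_pos M); lra).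
  exists L. split; auto. intros p.
  apply NNPP. intros Hn.
  assert (Hall : forall z, Zmem a z -> L * F a p + L < d p (act z y)).
  { intros z Hz. apply Rnot_le_lt. intros Hle. apply Hn. eauto. }
  assert (Hit : forall n : nat, exists z, Zmem a z /\ d p (act z y) <= d p y - 2 * INR n).
  { induction n as [|n [z [Hz Hd]]].
    - exists e. split. apply Zmem_e. rewrite act_e. simpl. lra.
    - set (D0 := d p (act z y)).
      pose proof (Hall z Hz) as Hgt. fold D0 in Hgt.
      pose proof (F_nonneg a p) as HF.
      assert (HD0 : L < D0) by nra.
      destruct (Hgeo (act z y) p) as [c Hc].
      set (t0 := L / D0).
      assert (Ht0 : 0 <= t0 <= 1).
      { unfold t0. split. unfold Rdiv; apply Rmult_le_pos; [lra|left; apply Rinv_0_lt_compat; lra].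
        apply Rmult_le_reg_r with D0. lra. unfold Rdiv. rewrite Rmult_assoc, Rinv_l by lra. lra. }
      assert (Eq1 : d (c t0) p = (1 - t0) * D0).
      { destruct Hc as [H0 [H1 H]]. rewrite <- H1. rewrite H by (auto; lra).
        rewrite Rabs_minus_sym, Rabs_pos_eq by lra. unfold D0. rewrite d_sym. reflexivity. }
      assert (Et : (1 - t0) * D0 = D0 - L). { unfold t0. field. lra. }
      destruct (Rle_lt_dec (F a (c t0)) (m1 + 1)) as [Hle|Hlt].
      + destruct (HM _ Hle) as [z' [Hz' Hd']]. exists z'. split; auto.
        pose proof (d_tri p (c t0) (act z' y)). rewrite d_sym in Eq1.
        rewrite S_INR. pose proof (Rle_abs M). fold D0 in Hd. unfold L in *. lra.
      + exfalso. pose proof (F_convex a _ _ _ _ Hc Ht0) as Hcv.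
        rewrite F_Z in Hcv by auto. fold m1 in Hcv.
        assert (Hm1 : 0 <= m1) by apply F_nonneg.
        assert (1 < t0 * (F a p - m1)) by lra.
        unfold t0 in H. assert (D0 < L * (F a p - m1)).
        { apply Rmult_lt_reg_l with (/ D0). apply Rinv_0_lt_compat; lra.
          rewrite Rinv_l by lra. unfold Rdiv in H. lra. }
        nra. }
  destruct (INR_archimed 2 (d p y) ltac:(lra)) as [n Hn2].
  destruct (Hit n) as [z [_ Hz]]. pose proof (d_nonneg p (act z y)). lra.
Qed.

Lemma sum_combine (f : G -> R) l1 l2 : length l1 = length l2 ->
  sumR (map (fun p => f (fst p) + f (snd p)) (combine l1 l2)) = sumR (map f l1) + sumR (map f l2).
Proof.
  revert l2. induction l1 as [|x l1 IH]; intros [|x2 l2] H; simpl in *; try lia; try lra.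
  rewrite IH by lia. lra.
Qed.

Lemma F_eq a h y : F a (act h y) = sumR (map (fun x => dy G Y d act y x e) (map (conjg G mul inv h) a)).
Proof.
  unfold F. rewrite map_map. f_equal. apply map_ext. intros ai.
  unfold dy. rewrite act_e, (d_sym (act (conjg G mul inv h ai) y) y), d_conj. reflexivity.
Qed.

Lemma main_sec (y : Y) (a : list G) :
    exists Cstar C : R, 0 <= Cstar /\ 0 <= C /\
      forall a' b' : list G,
        conj_lists G mul inv a a' -> conj_lists G mul inv a b' ->
        exists g : G, b' = map (conjg G mul inv g) a' /\
          dy G Y d act y g e <=
            Cstar * sumR (map (fun p => dy G Y d act y (fst p) e + dy G Y d act y (snd p) e)
                              (combine a' b')) + C.
Proof.
  destruct (growth a y) as [L [HL HG]].
  exists L, (2 * L). split. lra. split. lra.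
  intros a' b' [h ->] [k ->].
  destruct (HG (act h y)) as [z0 [Hz0 Hd0]].
  destruct (HG (act k y)) as [z1 [Hz1 Hd1]].
  exists (mul (inv h) (mul (mul z0 (inv z1)) k)). split.
  - rewrite map_map. apply map_ext_in. intros ai Hai.
    rewrite <- conjg_mul. rewrite massoc, minvr, mel.
    rewrite conjg_mul. f_equal. rewrite conjg_mul.
    rewrite (map_fix _ _ _ Hz0 Hai). rewrite <- (map_fix _ _ _ Hz1 Hai) at 2. rewrite conjg_inv. reflexivity.
  - rewrite (sum_combine (fun x => dy G Y d act y x e)) by (rewrite !length_map; reflexivity).
    rewrite <- !F_eq.
    unfold dy. rewrite act_e, act_mul, d_act_inv.
    rewrite !act_mul.
    pose proof (d_tri (act z0 (act (inv z1) (act k y))) (act z0 y) (act h y)) as T1.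
    rewrite act_iso in T1. rewrite d_act_inv in T1.
    rewrite (d_sym (act z0 y) (act h y)) in T1. rewrite (d_sym (act k y)) in Hd1.
    rewrite Rmult_plus_distr_l. rewrite (d_sym (act k y)) in T1. lra.
Qed.

End Main.

Theorem lemma4 (Y : Type) (d : Y -> Y -> R)
  (G : Type) (mul : G -> G -> G) (inv : G -> G) (e : G) (act : G -> Y -> Y) (y : Y) :
  hadamard Y d -> locally_compact Y d ->
  is_group G mul inv e ->
  isometric_action G mul e Y d act ->
  proper_action G Y d act ->
  cocompact_action G Y d act ->
  forall a : list G,
    exists Cstar C : R, 0 <= Cstar /\ 0 <= C /\
      forall a' b' : list G,
        conj_lists G mul inv a a' -> conj_lists G mul inv a b' ->
        exists g : G, b' = map (conjg G mul inv g) a' /\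
          dy G Y d act y g e <=
            Cstar * sumR (map (fun p => dy G Y d act y (fst p) e + dy G Y d act y (snd p) e)
                              (combine a' b')) + C.
Proof.
  intros [Hmet [_ [Hgeo Hcat]]] _ Hgrp Hact Hprop Hcoc a.
  exact (main_sec Y d G mul inv e act Hmet Hgeo Hcat Hgrp Hact Hprop Hcoc y a).
Qed.
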